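(* Let $\mathcal{C}$ be a finite set of latent classes with cardinality $N_{\mathcal{C}}$, let $\rho$ be a probability distribution on $\mathcal{C}$ with $\rho(c)>0$ for all $c\in\mathcal{C}$, and for each $c\in\mathcal{C}$ let $\mathcal{D}_c$ be a distribution on a feature space $\mathcal{X}$. Then for any encoder $f:\mathcal{X}\to\mathbb{R}^d$, $$L_{\mathrm{sup}}(f,\mathcal{C}) \le L^\mu_{\mathrm{sup}}(f,\mathcal{C}) \le \frac{1}{p^\rho_{\min}} L_{\mathrm{un}}(f) + \log N_{\mathcal{C}},$$ where $p^\rho_{\min}=\min_{c\in\mathcal{C}}\rho(c)$.
   Context: Positive pairs are drawn from $\mathcal{D}_{\mathrm{sim}}(x,x^+)=\sum_{c\in\mathcal{C}}\rho(c)\mathcal{D}_c(x)\mathcal{D}_c(x^+)$ and negatives from $\mathcal{D}_{\mathrm{neg}}(x^-)=\sum_{c\in\mathcal{C}}\rho(c)\mathcal{D}_c(x^-)$. The unsupervised loss with one negative is $$L_{\mathrm{un}}(f)=\mathbb{E}_{(x,x^+)\sim\mathcal{D}_{\mathrm{sim}},\,x^-\sim\mathcal{D}_{\mathrm{neg}}}\Big[-\log\frac{\exp(f(x)^Tf(x^+))}{\exp(f(x)^Tf(x^+))+\exp(f(x)^Tf(x^-))}\Big].$$ With $\mathcal{D}_{\mathcal{C}}(x,c)=\rho(c)\mathcal{D}_c(x)$, the supervised loss is $$L_{\mathrm{sup}}(f,\mathcal{C})=\inf_{W\in\mathbb{R}^{N_{\mathcal{C}}\times d}}\mathbb{E}_{(x,c)\sim\mathcal{D}_{\mathcal{C}}}\Big[-\log\frac{\exp((Wf(x))_c)}{\sum_{c'\in\mathcal{C}}\exp((Wf(x))_{c'})}\Big],$$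 and $L^\mu_{\mathrm{sup}}(f,\mathcal{C})$ is the same expectation evaluated at the mean classifier $W^\mu$ whose row indexed by $c$ is $\mu_c=\mathbb{E}_{x\sim\mathcal{D}_c}[f(x)]$ (no infimum). *)

(* Defs.v *)
From HB Require Import structures.
From mathcomp Require Import all_boot all_order all_algebra.
From mathcomp Require Import all_classical all_reals all_analysis.
Set Implicit Arguments. Unset Strict Implicit. Unset Printing Implicit Defensive.
Import Order.TTheory GRing.Theory Num.Theory.
Local Open Scope ring_scope.
Local Open Scope ereal_scope.

Section ContrastiveDefs.
Context {d0 : measure_display} {X : measurableType d0} {R : realType}.
Context {C : finType} {d : nat}.
Variables (rho : C -> R) (D : C -> probability X R) (f : X -> 'rV[R]_d).

Definition dotp (u v : 'rV[R]_d) : R := \sum_(i < d) u 0%R i * v 0%R i.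

Definition lossun (x xp xn : X) : R :=
  - ln (expR (dotp (f x) (f xp)) /
        (expR (dotp (f x) (f xp)) + expR (dotp (f x) (f xn)))).

Definition E_neg (g : X -> \bar R) : \bar R :=
  \sum_(c : C) (rho c)%:E * \int[D c]_xn g xn.

Definition E_sim (h : X -> X -> \bar R) : \bar R :=
  \sum_(c : C) (rho c)%:E * \int[D c]_x \int[D c]_xp h x xp.

Definition L_un : \bar R :=
  E_sim (fun x xp => E_neg (fun xn => (lossun x xp xn)%:E)).

Definition lossW (W : C -> 'rV[R]_d) (x : X) (c : C) : R :=
  - ln (expR (dotp (W c) (f x)) / \sum_(c' : C) expR (dotp (W c') (f x))).

Definition L_supW (W : C -> 'rV[R]_d) : \bar R :=
  \sum_(c : C) (rho c)%:E * \int[D c]_x (lossW W x c)%:E.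

Definition L_sup : \bar R := ereal_inf (range L_supW).

Definition mu (c : C) : 'rV[R]_d :=
  \row_(i < d) Rintegral (D c) setT (fun x => f x 0%R i).

Definition L_sup_mu : \bar R := L_supW mu.

Definition pmin : R := fine (\big[Order.min/+oo]_(c : C) (rho c)%:E).

End ContrastiveDefs.

(* Main.v *)
Require Import Defs.
From HB Require Import structures.
From mathcomp Require Import all_boot all_order all_algebra.
From mathcomp Require Import all_classical all_reals all_analysis.
From mathcomp Require Import measurable_realfun.
From mathcomp Require Import ring lra.
Import Order.TTheory GRing.Theory Num.Theory.
Local Open Scope ring_scope.

Definition l2 {R : realType} (t : R) : R := ln (1 + expR (- t))%R.

Lemma l2_ge0 {R : realType} (t : R) : (0 <= l2 t)%R.
Proof. by apply: ln_ge0; rewrite lerDl expR_ge0. Qed.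

Lemma l2_geN {R : realType} (t : R) : (- t <= l2 t)%R.
Proof.
rewrite /l2 -{1}(expRK (- t)) ler_ln ?posrE ?expR_gt0 ?lerDr//.
Qed.

Lemma l2_tangent {R : realType} (m y : R) :
  (l2 m - expR (- m) / (1 + expR (- m)) * (y - m) <= l2 y)%R.
Proof.
set E := expR (- m); set s := E / (1 + E); set u := y - m.
have E0 : (0 < E)%R by rewrite expR_gt0.
have E1 : (0 < 1 + E)%R by rewrite addr_gt0.
have hs : (s * (1 + E) = E)%R by rewrite /s mulfVK// gt_eqF.
have s0 : (0 <= s)%R by rewrite /s divr_ge0// ltW.
have s1 : (s <= 1)%R by rewrite /s ler_pdivrMr// mul1r lerDr.
set q := expR (- (s * u)).
have q0 : (0 < q)%R by rewrite expR_gt0.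
have ha : (1 - (1 - s) * u <= expR (- ((1 - s) * u)))%R.
  by have := expR_ge1Dx (- ((1 - s) * u)).
have hb : (1 + s * u <= expR (s * u))%R by exact: expR_ge1Dx.
have qa : (q * expR (- ((1 - s) * u)) = expR (- u))%R.
  by rewrite /q -expRD; congr expR; ring.
have qb : (q * expR (s * u) = 1)%R.
  by rewrite /q -expRD addNr expR0.
have h1 : (1 + E <= expR (s * u) + E * expR (- ((1 - s) * u)))%R.
  apply: le_trans (lerD hb (ler_wpM2l (ltW E0) ha)).
  have -> : (E * (1 - (1 - s) * u) = E - s * u + u * (s * (1 + E) - E))%R by ring.
  rewrite hs subrr mulr0 addr0 le_eqVlt; apply/orP; left; apply/eqP; ring.
have key : ((1 + E) * q <= 1 + E * expR (- u))%R.
  have -> : (1 + E * expR (- u) = q * (expR (s * u) + E * expR (- ((1 - s) * u))))%R.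
    by rewrite mulrDr qb mulrCA qa.
  by rewrite mulrC ler_pM2l.
have ey : expR (- y) = (E * expR (- u))%R by rewrite /E -expRD; congr expR; rewrite /u; ring.
rewrite /l2 ey -/E.
have -> : (ln (1 + E) - s * u = ln ((1 + E) * q))%R.
  by rewrite lnM ?posrE// /q expRK.
rewrite ler_ln ?posrE// ?mulr_gt0//.
by rewrite addr_gt0// mulr_gt0// expR_gt0.
Qed.

Local Open Scope ereal_scope.

Lemma ge0_le_integral_nm d (T : measurableType d) (R : realType)
  (m : {measure set T -> \bar R}) (f g : T -> \bar R) :
  (forall x, 0 <= f x) -> (forall x, f x <= g x) ->
  \int[m]_x f x <= \int[m]_x g x.
Proof.
move=> f0 fg.
have g0 : forall x, 0 <= g x by move=> x; exact: le_trans (f0 x) (fg x).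
rewrite !ge0_integralTE//.
apply: ereal_sup_le => _ [h /= hf <-]; exists h => //= x.
exact: le_trans (hf x) (fg x).
Qed.


Lemma jensen_l2 d (T : measurableType d) (R : realType) (P : probability T R)
  (Y : T -> R) : P.-integrable setT (EFin \o Y) ->
  (l2 (fine (\int[P]_x (Y x)%:E)))%:E <= \int[P]_x (l2 (Y x))%:E.
Proof.
move=> iY.
set m := fine _.
have hm : \int[P]_x (Y x)%:E = m%:E by rewrite fineK // (integrable_fin_num _ iY).
set s := (expR (- m) / (1 + expR (- m)))%R.
pose aff x := (l2 m - s * (Y x - m))%R.
have eaff : (fun x => (aff x)%:E) =
    (fun x => cst (l2 m + s * m)%R%:E x + (- s)%R%:E * (Y x)%:E).
  by apply: funext => x; rewrite /aff /= -EFinM -EFinD; congr EFin; ring.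
have i1 : P.-integrable setT (fun x => cst (l2 m + s * m)%R%:E x).
  exact: (finite_measure_integrable_cst _ (l2 m + s * m)%R measurableT).
have i2 : P.-integrable setT (fun x => (- s)%R%:E * (Y x)%:E).
  exact: integrableZl.
have Iaff : \int[P]_x (aff x)%:E = (l2 m)%:E.
  rewrite eaff integralD // integral_cst //.
  set t := (X in (_%:E * X + _)); have -> : t = 1 by exact: probability_setT.
  rewrite mule1.
  rewrite integralZl // hm -EFinM -EFinD; congr EFin; ring.
rewrite -Iaff integralE.
apply: le_trans (_ : \int[P]_x ((fun x => (aff x)%:E)^\+ x) <= _).
  rewrite -[X in _ <= X]sube0; apply: leeB => //.
  exact: integral_ge0 => x _; exact: funeneg_ge0.
apply: ge0_le_integral_nm => x; first exact: funepos_ge0.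
rewrite funeposE ge_max !lee_fin l2_ge0 andbT.
exact: l2_tangent.
Qed.

Lemma dotpC {R : realType} {n : nat} (u v : 'rV[R]_n) : dotp u v = dotp v u.
Proof. by rewrite /dotp; apply: eq_bigr => i _; rewrite mulrC. Qed.

Lemma int_dotp d0 (X : measurableType d0) (R : realType) (C : finType) (n : nat)
  (D : C -> probability X R) (f : X -> 'rV[R]_n) :
  (forall (c : C) (i : 'I_n), (D c).-integrable setT (fun x => (f x 0%R i)%:E)) ->
  forall c (u : 'rV[R]_n),
  (D c).-integrable setT (fun x => (dotp u (f x))%:E) /\
  \int[D c]_x (dotp u (f x))%:E = (dotp u (mu D f c))%:E.
Proof.
move=> hf c u.
have e : (fun x => (dotp u (f x))%:E) =
    (fun x => \sum_(i < n) (u 0%R i)%:E * (f x 0%R i)%:E).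
  by apply: funext => x; rewrite /dotp -sumEFin; apply: eq_bigr => i _; rewrite EFinM.
have ii : forall i, (D c).-integrable setT (fun x => (u 0%R i)%:E * (f x 0%R i)%:E).
  by move=> i; apply: integrableZl => //; exact: hf.
split.
  rewrite e; apply: integrable_sum => // i _; exact: ii.
rewrite e (integral_sum _ ii) // /dotp.
apply: (@eq_trans _ _ (\sum_(i < n) (u 0%R i * mu D f c 0%R i)%:E)%R); last by rewrite sumEFin.
apply: eq_bigr => i _.
rewrite integralZl //; last exact: hf.
rewrite EFinM; congr (_ * _).
rewrite /mu mxE /Rintegral fineK //; exact: integrable_fin_num (hf c i).
Qed.

Lemma measurable_l2 {R : realType} : measurable_fun setT (@l2 R).
Proof.
apply: (measurableT_comp (@measurable_realfun.measurable_ln R)).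
apply: measurable_realfun.measurable_funD => //.
exact: (measurableT_comp (@measurable_realfun.measurable_expR R) (@measurable_realfun.oppr_measurable R setT)).
Qed.

Lemma lossun_l2 d0 (X : measurableType d0) (R : realType) (n : nat)
  (f : X -> 'rV[R]_n) x xp xn :
  lossun f x xp xn = l2 (dotp (f x) (f xp) - dotp (f x) (f xn))%R.
Proof.
rewrite /lossun /l2; set A := dotp _ _; set B := dotp _ _.
have eA : (0 < expR A)%R by rewrite expR_gt0.
have -> : (expR A / (expR A + expR B) = (1 + expR (- (A - B)))^-1)%R.
  have eB : (0 < expR B)%R by rewrite expR_gt0.
  rewrite opprB expRD expRN; field.
  by rewrite !gt_eqF ?addr_gt0.
have hp : (1 + expR (- (A - B)))%R \in Num.pos by rewrite posrE addr_gt0 // expR_gt0.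
by rewrite (lnV hp) opprK.
Qed.

Section ringpart.
Local Close Scope ereal_scope.

Lemma lossW_bound {R : realType} (C : finType) (rho : C -> R) (pm : R)
  (a : C -> R) (c : C) :
  (forall c, 0 < rho c) -> 0 < pm -> (forall c, pm <= rho c) ->
  0 <= - ln (expR (a c) / \sum_(c' : C) expR (a c')) <=
  ln (#|C|%:R) + pm^-1 * \sum_(c' : C) rho c' * l2 (a c - a c').
Proof.
move=> r0 pm0 pml.
pose cs := [arg max_(i > c) a i]%O.
have hmax : forall i, a i <= a cs.
  by rewrite /cs; case: arg_maxP => // j _ H i; exact: H.
set S := \sum_(c' : C) expR (a c').
have aS : expR (a c) <= S.
  by rewrite /S (bigD1 c) //= lerDl sumr_ge0 // => i _; exact: expR_ge0.
have S0 : 0 < S by exact: lt_le_trans (expR_gt0 (a c)) aS.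
have N0 : (0 < #|C|)%N by apply/card_gt0P; exists c.
have N0' : 0 < (#|C|%:R : R) by rewrite ltr0n.
have Sle : S <= #|C|%:R * expR (a cs).
  apply: le_trans (_ : \sum_(c' : C) expR (a cs) <= _).
    by apply: ler_sum => i _; rewrite ler_expR.
  by rewrite sumr_const mulr_natl.
have eq : - ln (expR (a c) / S) = ln S - a c.
  have hS : S^-1 \in Num.pos by rewrite posrE invr_gt0.
  rewrite lnM ?posrE ?expR_gt0 // expRK (lnV (_ : S \in Num.pos)) ?posrE //.
  by rewrite opprD opprK addrC.
rewrite eq; apply/andP; split.
  by rewrite subr_ge0 -{1}(expRK (a c)) ler_ln ?posrE ?expR_gt0.
have h1 : ln S <= ln (#|C|%:R) + a cs.
  by rewrite -[X in _ <= _ + X](expRK (a cs)) -lnM ?posrE ?expR_gt0 // ler_ln ?posrE ?mulr_gt0 ?expR_gt0.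
have h2 : a cs - a c <= l2 (a c - a cs) by rewrite -opprB; exact: l2_geN.
have h3 : l2 (a c - a cs) <= pm^-1 * (rho cs * l2 (a c - a cs)).
  rewrite mulrA; apply: ler_peMl; first exact: l2_ge0.
  by rewrite ler_pdivlMl // mulr1.
have h4 : rho cs * l2 (a c - a cs) <= \sum_(c' : C) rho c' * l2 (a c - a c').
  rewrite (bigD1 cs) //= lerDl sumr_ge0 // => i _.
  by rewrite mulr_ge0 ?l2_ge0 // ltW.
have pmi : 0 <= pm^-1 by rewrite invr_ge0 ltW.
have h5 := ler_wpM2l pmi h4.
lra.
Qed.

Lemma lossW_ge0_aux {R : realType} (C : finType) (a : C -> R) (c : C) :
  0 <= - ln (expR (a c) / \sum_(c' : C) expR (a c')).
Proof.
set S := \sum_(c' : C) expR (a c').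
have aS : expR (a c) <= S.
  by rewrite /S (bigD1 c) //= lerDl sumr_ge0 // => i _; exact: expR_ge0.
have S0 : 0 < S by exact: lt_le_trans (expR_gt0 (a c)) aS.
rewrite oppr_ge0; apply: ln_le0.
by rewrite ler_pdivrMr // mul1r.
Qed.

End ringpart.

Section jdot.
Context d0 (X : measurableType d0) (R : realType) (C : finType) (n : nat)
  (D : C -> probability X R) (f : X -> 'rV[R]_n).
Hypothesis hf : forall (c : C) (i : 'I_n),
  (D c).-integrable setT (fun x => (f x 0%R i)%:E).

Lemma jensen_dotA c (A : R) (v : 'rV[R]_n) :
  (l2 (A - dotp v (mu D f c)))%:E <= \int[D c]_x (l2 (A - dotp v (f x)))%:E.
Proof.
have [iv Iv] := @int_dotp _ _ _ _ _ D f hf c v.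
have ic : (D c).-integrable setT (EFin \o (fun _ => A)).
  exact: (finite_measure_integrable_cst (D c) A measurableT).
have iY : (D c).-integrable setT (EFin \o (fun x => A - dotp v (f x))%R).
  apply: eq_integrable (integrableB measurableT ic iv) => //= x _.
have := @jensen_l2 _ _ _ (D c) _ iY.
have -> : fine (\int[D c]_x (A - dotp v (f x))%:E) = (A - dotp v (mu D f c))%R => //.
under eq_integral do rewrite EFinB.
rewrite (integralB_EFin _ ic iv) //= integral_cst //.
set t := (X in (_ * X - _)); have -> : t = 1 by exact: probability_setT.
by rewrite mule1 Iv -EFinB.
Qed.

Lemma jensen_dotB c (B : R) (v : 'rV[R]_n) :
  (l2 (dotp v (mu D f c) - B))%:E <= \int[D c]_x (l2 (dotp v (f x) - B))%:E.
Proof.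
have [iv Iv] := @int_dotp _ _ _ _ _ D f hf c v.
have ic : (D c).-integrable setT (EFin \o (fun _ => B)).
  exact: (finite_measure_integrable_cst (D c) B measurableT).
have iY : (D c).-integrable setT (EFin \o (fun x => dotp v (f x) - B)%R).
  apply: eq_integrable (integrableB measurableT iv ic) => //= x _.
have := @jensen_l2 _ _ _ (D c) _ iY.
have -> : fine (\int[D c]_x (dotp v (f x) - B)%:E) = (dotp v (mu D f c) - B)%R => //.
under eq_integral do rewrite EFinB.
rewrite (integralB_EFin _ iv ic) //= integral_cst //.
set t := (X in (_ - _ * X)); have -> : t = 1 by exact: probability_setT.
by rewrite mule1 Iv -EFinB.
Qed.

End jdot.

Theorem lemma3p1 (d0 : measure_display) (X : measurableType d0) (R : realType)
  (C : finType) (rho : C -> R) (D : C -> probability X R) (d : nat)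
  (f : X -> 'rV[R]_d) :
  (forall c, (0 < rho c)%R) ->
  (\sum_(c : C) rho c)%R = 1%R ->
  (forall i : 'I_d, measurable_fun setT (fun x => f x 0%R i)) ->
  (forall (c : C) (i : 'I_d), (D c).-integrable setT (fun x => (f x 0%R i)%:E)) ->
  L_sup rho D f <= L_sup_mu rho D f /\
  L_sup_mu rho D f <= (pmin rho)^-1%:E * L_un rho D f + (ln (#|C|%:R))%:E.
Proof.
move=> rho0 rho1 mf hf.
split.
  by apply: ereal_inf_lbound; exists (mu D f).
have [c0 _] : exists c0 : C, true.
  case: (pickP (@predT C)) => [c0 _|h]; first by exists c0.
  move: rho1; rewrite big1 => [/esym/eqP|i _]; first by rewrite oner_eq0.
  by have := h i.
have [cm _ hcm] := eq_bigmin c0 xpredT (fun c => (rho c)%:E) isT (fun i _ => leey _).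
set p := pmin rho.
have pE : p = rho cm by rewrite /p /pmin hcm.
have p0 : (0 < p)%R by rewrite pE.
have ple : forall c, (p <= rho c)%R.
  move=> c; rewrite -lee_fin pE -hcm; exact: bigmin_le.
set K := ln (#|C|%:R : R).
have K0 : (0 <= K)%R.
  by apply: ln_ge0; rewrite ler1n; apply/card_gt0P; exists c0.
have mdot : forall u, measurable_fun setT (fun x => dotp u (f x)).
  move=> u; have [iu _] := @int_dotp _ _ _ _ _ D f hf c0 u.
  by apply/measurable_realfun.measurable_EFinP; exact: (measurable_int _ iu).
pose a x c' := dotp (mu D f c') (f x).
pose k c c' x := l2 (a x c - a x c').
have mk : forall c c', measurable_fun setT (k c c').
  move=> c c'; apply: (measurableT_comp measurable_l2).
  by apply: measurable_realfun.measurable_funB; exact: mdot.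
pose G c x := \int[D c]_xp E_neg rho D (fun xn => (lossun f x xp xn)%:E).
have stepB : forall c x, \sum_(c' : C) (rho c' * k c c' x)%:E <= G c x.
  move=> c x.
  pose h c' xp := l2 (dotp (f x) (f xp) - dotp (f x) (mu D f c')).
  have B1 : forall xp, \sum_(c' : C) (rho c')%:E * (h c' xp)%:E <=
      E_neg rho D (fun xn => (lossun f x xp xn)%:E).
    move=> xp; rewrite /E_neg; apply: lee_sum => c' _.
    apply: lee_wpmul2l; first by rewrite lee_fin ltW.
    under eq_integral do rewrite lossun_l2.
    exact: jensen_dotA.
  have B2 : \int[D c]_xp (\sum_(c' : C) (rho c')%:E * (h c' xp)%:E) <= G c x.
    apply: ge0_le_integral_nm => // xp; apply: sume_ge0 => c' _.
    by rewrite -EFinM lee_fin mulr_ge0 ?l2_ge0 // ltW.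
  apply: le_trans B2.
  have mh0 : forall c', measurable_fun setT ((fun xp => (h c' xp)%:E) : X -> \bar R).
    move=> c'; apply/measurable_realfun.measurable_EFinP; apply: (measurableT_comp measurable_l2).
    by apply: measurable_realfun.measurable_funB => //; exact: mdot.
  have mh : forall c', measurable_fun setT ((fun xp => (rho c')%:E * (h c' xp)%:E) : X -> \bar R).
    by move=> c'; apply: emeasurable_funM => //.
  have h0 : forall c' xp, setT xp -> 0 <= (rho c')%:E * (h c' xp)%:E.
    by move=> c' xp _; rewrite -EFinM lee_fin mulr_ge0 ?l2_ge0 // ltW.
  rewrite (ge0_integral_sum (D c) measurableT mh h0).
  apply: lee_sum => c' _.
  rewrite ge0_integralZl_EFin //; last 2 first.
  - by move=> xp _; rewrite lee_fin l2_ge0.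
  - exact: ltW.
  rewrite EFinM; apply: lee_wpmul2l; first by rewrite lee_fin ltW.
  have := @jensen_dotB _ _ _ _ _ D f hf c (dotp (f x) (mu D f c')) (f x).
  by rewrite /k /a (dotpC (mu D f c)) (dotpC (mu D f c')).
have stepA : forall c, \int[D c]_x (lossW f (mu D f) x c)%:E <=
    K%:E + p^-1%:E * \int[D c]_x G c x.
  move=> c.
  have mS : measurable_fun setT (fun x => \sum_(c' : C) (rho c' * k c c' x)%:E).
    apply: emeasurable_sum => c'; apply/measurable_EFinP.
    exact: (measurable_funM (measurable_cst _) (mk c c')).
  have S0 : forall x, 0 <= \sum_(c' : C) (rho c' * k c c' x)%:E.
    by move=> x; apply: sume_ge0 => c' _; rewrite lee_fin mulr_ge0 ?l2_ge0 // ltW.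
  have pi0 : (0 <= p^-1)%R by rewrite invr_ge0 ltW.
  apply: (@le_trans _ _ (\int[D c]_x (K%:E + p^-1%:E * \sum_(c' : C) (rho c' * k c c' x)%:E))).
    apply: ge0_le_integral_nm => x; first by rewrite lee_fin; exact: lossW_ge0_aux.
    rewrite /lossW.
    have /andP[_ H] := @lossW_bound R C rho p (fun c' => dotp (mu D f c') (f x)) c rho0 p0 ple.
    by rewrite sumEFin -EFinM -EFinD lee_fin.
  rewrite ge0_integralD //; last 2 first.
  - by move=> x _; rewrite mule_ge0 // lee_fin.
  - by apply: emeasurable_funM => //; exact: measurable_cst.
  rewrite integral_cst //.
  set t := (X in (_ * X + _)); have -> : t = 1 by exact: probability_setT.
  rewrite mule1 ge0_integralZl_EFin //.
  apply: leeD2l; apply: lee_wpmul2l; first by rewrite lee_fin.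
  by apply: ge0_le_integral_nm => // x; exact: stepB.
have I0 : forall c, 0 <= \int[D c]_x G c x.
  move=> c; apply: integral_ge0 => x _; apply: integral_ge0 => xp _.
  rewrite /E_neg; apply: sume_ge0 => c' _; apply: mule_ge0; first by rewrite lee_fin ltW.
  by apply: integral_ge0 => xn _; rewrite lossun_l2 lee_fin l2_ge0.
rewrite /L_sup_mu /L_supW.
apply: le_trans (_ : \sum_(c : C) (rho c)%:E * (K%:E + p^-1%:E * \int[D c]_x G c x) <= _).
  apply: lee_sum => c _; apply: lee_wpmul2l; [by rewrite lee_fin ltW | exact: stepA].
rewrite le_eqVlt; apply/orP; left; apply/eqP.
under eq_bigr do rewrite muleDr //.
rewrite big_split /= addeC.
have -> : \sum_(c : C) (rho c)%:E * K%:E = K%:E.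
  under eq_bigr do rewrite -EFinM.
  by rewrite sumEFin -mulr_suml rho1 mul1r.
congr (_ + _).
rewrite /L_un /E_sim ge0_sume_distrr; last first.
  by move=> c _; apply: mule_ge0; [rewrite lee_fin ltW | exact: I0].
by apply: eq_bigr => c _; rewrite muleCA.
Qed.
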